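(* Let $Q\in\mathbb{R}^{n\times n}$ be symmetric positive definite, $h\in\mathbb{R}^n$, $\delta>0$, and $F(x)=\tfrac12x^TQx-x^Th$. Let $x^0\in\mathbb{R}^n$ have all entries positive and define the sequence $(x^k)$ by \[ x^{k+1}_i=x^k_i\,\frac{2(Q^-x^k)_i+h_i^++\delta}{(|Q|x^k)_i+h_i^-+\delta},\quad i=1,\dots,n . \] Then every $x^k$ has all entries positive, $F(x^{k+1})\le F(x^k)$ for all $k$, with strict inequality whenever $x^{k+1}\neq x^k$; and the sequence $F(x^k)$ converges to the global minimum of $F$ over $\{x\in\mathbb{R}^n: x\ge 0\}$, which is attained at the stationary point of the iteration.
   Context: For a matrix $M$, $M^+=\max(M,0)$ and $M^-=\max(-M,0)$ entrywise, and $|M|=M^++M^-$; for a vector $h$, $h^+=\max(h,0)$, $h^-=\max(-h,0)$ entrywise. The problem considered is the nonnegative quadratic program $\min F(x)$ subject to $x\ge 0$ (entrywise). *)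

(* Defs.v *)
(* real analysis (limits) needs Stdlib Reals.
   Vectors in R^n are functions nat -> R (only indices i < n matter),
   matrices are functions nat -> nat -> R (only i, j < n matter). *)
From Stdlib Require Import Reals.
Open Scope R_scope.

Fixpoint rsum (n : nat) (f : nat -> R) : R :=
  match n with
  | O => 0
  | S m => rsum m f + f m
  end.

Definition matvec (n : nat) (M : nat -> nat -> R) (x : nat -> R) (i : nat) : R :=
  rsum n (fun j => M i j * x j).

Definition quadform (n : nat) (M : nat -> nat -> R) (x : nat -> R) : R :=
  rsum n (fun i => x i * matvec n M x i).

Definition symmetric (n : nat) (Q : nat -> nat -> R) : Prop :=
  forall i j, (i < n)%nat -> (j < n)%nat -> Q i j = Q j i.

Definition pos_def (n : nat) (Q : nat -> nat -> R) : Prop :=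
  forall x : nat -> R, (exists i, (i < n)%nat /\ x i <> 0) -> 0 < quadform n Q x.

Definition Fobj (n : nat) (Q : nat -> nat -> R) (h : nat -> R) (x : nat -> R) : R :=
  / 2 * quadform n Q x - rsum n (fun i => x i * h i).

Definition pospart (a : R) : R := Rmax a 0.
Definition negpart (a : R) : R := Rmax (- a) 0.
Definition Mpos (Q : nat -> nat -> R) : nat -> nat -> R := fun i j => pospart (Q i j).
Definition Mneg (Q : nat -> nat -> R) : nat -> nat -> R := fun i j => negpart (Q i j).
Definition Mabs (Q : nat -> nat -> R) : nat -> nat -> R := fun i j => Mpos Q i j + Mneg Q i j.

Definition step (n : nat) (Q : nat -> nat -> R) (h : nat -> R) (delta : R)
  (x : nat -> R) : nat -> R :=
  fun i => x i * ((2 * matvec n (Mneg Q) x i + pospart (h i) + delta)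
                  / (matvec n (Mabs Q) x i + negpart (h i) + delta)).

Fixpoint iterate (n : nat) (Q : nat -> nat -> R) (h : nat -> R) (delta : R)
  (x0 : nat -> R) (k : nat) : nat -> R :=
  match k with
  | O => x0
  | S k' => step n Q h delta (iterate n Q h delta x0 k')
  end.

(* Main.v *)
Require Import Defs.
From Stdlib Require Import Reals Lra Lia Psatz Classical ClassicalEpsilon FunctionalExtensionality.
Open Scope R_scope.

Lemma rsum_ext m f g : (forall i, (i < m)%nat -> f i = g i) -> rsum m f = rsum m g.
Proof. induction m; simpl; intros H; auto. rewrite IHm by (intros; apply H; lia). rewrite H by lia. auto. Qed.

Lemma rsum_plus m f g : rsum m (fun i => f i + g i) = rsum m f + rsum m g.
Proof. induction m; simpl; [lra|rewrite IHm; lra]. Qed.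

Lemma rsum_minus m f g : rsum m (fun i => f i - g i) = rsum m f - rsum m g.
Proof. induction m; simpl; [lra|rewrite IHm; lra]. Qed.

Lemma rsum_scal m c f : rsum m (fun i => c * f i) = c * rsum m f.
Proof. induction m; simpl; [lra|rewrite IHm; lra]. Qed.

Lemma rsum_zero m f : (forall i, (i < m)%nat -> f i = 0) -> rsum m f = 0.
Proof. induction m; simpl; intros H; auto. rewrite IHm by (intros; apply H; lia). rewrite H by lia. lra. Qed.

Lemma rsum_le m f g : (forall i, (i < m)%nat -> f i <= g i) -> rsum m f <= rsum m g.
Proof. induction m; simpl; intros H; [lra|]. specialize (IHm (fun i Hi => H i ltac:(lia))). specialize (H m ltac:(lia)). lra. Qed.

Lemma rsum_nonneg m f : (forall i, (i < m)%nat -> 0 <= f i) -> 0 <= rsum m f.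
Proof. intros H. rewrite <- (rsum_zero m (fun _ => 0)) by auto. apply rsum_le; auto. Qed.

Lemma rsum_term m f i : (forall j, (j < m)%nat -> 0 <= f j) -> (i < m)%nat -> f i <= rsum m f.
Proof. induction m; simpl; intros H Hi; [lia|].
  assert (0 <= rsum m f) by (apply rsum_nonneg; intros; apply H; lia).
  destruct (Nat.eq_dec i m). subst. lra.
  specialize (IHm (fun j Hj => H j ltac:(lia)) ltac:(lia)). specialize (H m ltac:(lia)). lra. Qed.

Lemma rsum_swap m p (f : nat -> nat -> R) :
  rsum m (fun i => rsum p (fun j => f i j)) = rsum p (fun j => rsum m (fun i => f i j)).
Proof. induction m; simpl.
  - symmetry; apply rsum_zero; auto.
  - rewrite IHm. rewrite <- rsum_plus. auto. Qed.

Lemma rsum_pos_ex m f : (forall i, (i < m)%nat -> 0 <= f i) -> (exists i, (i < m)%nat /\ 0 < f i) -> 0 < rsum m f.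
Proof. intros H [i [Hi Hp]]. pose proof (rsum_term m f i H Hi). lra. Qed.

Lemma rsum_abs m f : Rabs (rsum m f) <= rsum m (fun i => Rabs (f i)).
Proof. induction m; simpl. rewrite Rabs_R0; lra.
  eapply Rle_trans. apply Rabs_triang. lra. Qed.

Lemma Rabs_le_inv a b : Rabs a <= b -> - b <= a <= b.
Proof. unfold Rabs; destruct Rcase_abs; lra. Qed.
Lemma Rabs_lt_inv a b : Rabs a < b -> - b < a < b.
Proof. unfold Rabs; destruct Rcase_abs; lra. Qed.

Lemma Mabs_abs Q i j : Mabs Q i j = Rabs (Q i j).
Proof. unfold Mabs, Mpos, Mneg, pospart, negpart.
  unfold Rmax; repeat destruct Rle_dec; unfold Rabs; destruct Rcase_abs; lra. Qed.

Lemma pos_neg a : pospart a - negpart a = a.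
Proof. unfold pospart, negpart, Rmax; repeat destruct Rle_dec; lra. Qed.
Lemma negpart_nonneg a : 0 <= negpart a.
Proof. unfold negpart, Rmax; destruct Rle_dec; lra. Qed.
Lemma pospart_nonneg a : 0 <= pospart a.
Proof. unfold pospart, Rmax; destruct Rle_dec; lra. Qed.
Lemma negpart_le a : negpart a <= Rabs a.
Proof. unfold negpart, Rmax, Rabs; destruct Rle_dec; destruct Rcase_abs; lra. Qed.

Section Alg.
Variable n : nat.
Variable Q : nat -> nat -> R.
Variable h : nat -> R.
Variable delta : R.
Hypothesis HQs : symmetric n Q.
Hypothesis Hdelta : 0 < delta.

Definition grad x i := matvec n Q x i - h i.
Definition Dn x i := matvec n (Mabs Q) x i + negpart (h i) + delta.

Lemma matvec_plus M x y i : matvec n M (fun j => x j + y j) i = matvec n M x i + matvec n M y i.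
Proof. unfold matvec. rewrite <- rsum_plus. apply rsum_ext; intros; ring. Qed.

Lemma numer_eq x i : 2 * matvec n (Mneg Q) x i + pospart (h i) + delta = Dn x i - grad x i.
Proof. unfold Dn, grad, matvec.
  assert (E: rsum n (fun j => Mabs Q i j * x j) - rsum n (fun j => Q i j * x j)
     = 2 * rsum n (fun j => Mneg Q i j * x j)).
  { rewrite <- rsum_minus, <- rsum_scal. apply rsum_ext; intros.
    unfold Mabs. rewrite <- (pos_neg (Q i i0)). unfold Mpos, Mneg. ring. }
  pose proof (pos_neg (h i)). lra. Qed.

Lemma Dn_ge x i : (forall j, (j < n)%nat -> 0 <= x j) -> delta <= Dn x i.
Proof. intros H. unfold Dn. pose proof (negpart_nonneg (h i)).
  assert (0 <= matvec n (Mabs Q) x i). { apply rsum_nonneg; intros. rewrite Mabs_abs.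
  apply Rmult_le_pos; [apply Rabs_pos|auto]. } lra. Qed.

Lemma step_eq x i : (forall j, (j < n)%nat -> 0 <= x j) ->
  step n Q h delta x i = x i - x i * grad x i / Dn x i.
Proof. intros H. unfold step. rewrite numer_eq. pose proof (Dn_ge x i H). fold (Dn x i).
  field. lra. Qed.

Lemma bilin_sym x y : rsum n (fun i => x i * matvec n Q y i) = rsum n (fun i => y i * matvec n Q x i).
Proof. unfold matvec.
  transitivity (rsum n (fun i => rsum n (fun j => x i * Q i j * y j))).
  { apply rsum_ext; intros. rewrite <- rsum_scal. apply rsum_ext; intros; ring. }
  rewrite rsum_swap. apply rsum_ext; intros j Hj. rewrite <- rsum_scal. apply rsum_ext; intros i Hi.
  rewrite (HQs i j) by auto. ring. Qed.

Lemma quad_plus x d : quadform n Q (fun i => x i + d i) =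
   quadform n Q x + 2 * rsum n (fun i => d i * matvec n Q x i) + quadform n Q d.
Proof. unfold quadform.
  transitivity (rsum n (fun i => x i * matvec n Q x i) + rsum n (fun i => x i * matvec n Q d i)
     + (rsum n (fun i => d i * matvec n Q x i) + rsum n (fun i => d i * matvec n Q d i))).
  { rewrite <- !rsum_plus. apply rsum_ext; intros. rewrite matvec_plus. ring. }
  rewrite (bilin_sym x d). ring. Qed.

Lemma F_plus x d : Fobj n Q h (fun i => x i + d i) =
  Fobj n Q h x + rsum n (fun i => d i * grad x i) + / 2 * quadform n Q d.
Proof. unfold Fobj. rewrite quad_plus.
  assert (E: rsum n (fun i => (x i + d i) * h i) = rsum n (fun i => x i * h i) + rsum n (fun i => d i * h i)).
  { rewrite <- rsum_plus. apply rsum_ext; intros; ring. }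
  assert (E2: rsum n (fun i => d i * grad x i) = rsum n (fun i => d i * matvec n Q x i) - rsum n (fun i => d i * h i)).
  { rewrite <- rsum_minus. apply rsum_ext; intros. unfold grad; ring. }
  rewrite E, E2. field. Qed.

Lemma amgm a xi xj di dj : 0 < xi -> 0 < xj ->
  a * di * dj <= / 2 * (Rabs a * xj * (di * di) / xi + Rabs a * xi * (dj * dj) / xj).
Proof. intros Hi Hj.
  assert (a * di * dj <= Rabs a * (Rabs di * Rabs dj)).
  { pose proof (Rle_abs (a*di*dj)) as H0. rewrite !Rabs_mult in H0. lra. }
  assert (Rabs di * Rabs dj <= / 2 * (xj * (di * di) / xi + xi * (dj * dj) / xj)).
  { assert (E: xj * (di*di)/xi + xi*(dj*dj)/xj - 2 * (Rabs di * Rabs dj) =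
          (xj * Rabs di - xi * Rabs dj)^2 / (xi * xj)).
    { pose proof (Rsqr_abs di) as E1; pose proof (Rsqr_abs dj) as E2. unfold Rsqr in E1, E2.
      rewrite E1, E2. field. lra. }
    assert (0 <= (xj * Rabs di - xi * Rabs dj)^2 / (xi * xj)).
    { apply Rmult_le_pos. apply pow2_ge_0. left; apply Rinv_0_lt_compat; nra. } lra. }
  pose proof (Rabs_pos a). nra. Qed.

Lemma quad_le x d : (forall j, (j < n)%nat -> 0 < x j) ->
  quadform n Q d <= rsum n (fun i => matvec n (Mabs Q) x i * (d i * d i) / x i).
Proof. intros Hx.
  set (A := fun i j => Rabs (Q i j) * x j * (d i * d i) / x i).
  assert (E1: quadform n Q d = rsum n (fun i => rsum n (fun j => Q i j * d i * d j))).
  { unfold quadform, matvec. apply rsum_ext; intros. rewrite <- rsum_scal. apply rsum_ext; intros. ring. }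
  assert (E2: rsum n (fun i => matvec n (Mabs Q) x i * (d i * d i) / x i) = rsum n (fun i => rsum n (fun j => A i j))).
  { unfold matvec, A. apply rsum_ext; intros. unfold Rdiv. rewrite Rmult_assoc, Rmult_comm, <- rsum_scal.
    apply rsum_ext; intros. rewrite Mabs_abs. ring. }
  assert (E3: rsum n (fun i => rsum n (fun j => A j i)) = rsum n (fun i => rsum n (fun j => A i j))).
  { rewrite rsum_swap. auto. }
  rewrite E1, E2.
  apply Rle_trans with (rsum n (fun i => rsum n (fun j => / 2 * (A i j + A j i)))).
  { apply rsum_le; intros i Hi; apply rsum_le; intros j Hj. unfold A.
    rewrite (HQs j i) by auto. apply amgm; auto. }
  assert (E4: rsum n (fun i => rsum n (fun j => / 2 * (A i j + A j i))) =
     / 2 * (rsum n (fun i => rsum n (fun j => A i j)) + rsum n (fun i => rsum n (fun j => A j i)))).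
  { rewrite <- rsum_plus, <- rsum_scal. apply rsum_ext; intros. rewrite <- rsum_plus, <- rsum_scal. auto. }
  rewrite E4, E3. lra. Qed.

Definition gain x i := / 2 * Dn x i * ((step n Q h delta x i - x i) * (step n Q h delta x i - x i)) / x i.

Lemma descent x : (forall j, (j < n)%nat -> 0 < x j) ->
  Fobj n Q h (step n Q h delta x) <= Fobj n Q h x - rsum n (gain x).
Proof. intros Hx.
  assert (Hx' : forall j, (j < n)%nat -> 0 <= x j) by (intros j Hj; left; auto).
  set (d := fun i => step n Q h delta x i - x i).
  assert (E: Fobj n Q h (step n Q h delta x) = Fobj n Q h (fun i => x i + d i)).
  { f_equal. apply functional_extensionality; intro; unfold d; ring. }
  rewrite E, F_plus. pose proof (quad_le x d Hx).
  assert (rsum n (fun i => d i * grad x i) + / 2 * rsum n (fun i => matvec n (Mabs Q) x i * (d i * d i) / x i)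
    <= - rsum n (gain x)).
  { cut (rsum n (fun i => d i * grad x i + / 2 * (matvec n (Mabs Q) x i * (d i * d i) / x i) + gain x i) <= 0).
    { rewrite !rsum_plus, rsum_scal. lra. }
    rewrite <- (rsum_zero n (fun _ => 0)) by auto. apply rsum_le; intros i Hi.
    unfold gain. fold (d i).
    assert (Hd : d i = - (x i * grad x i / Dn x i)) by (unfold d; rewrite step_eq; auto; ring).
    pose proof (Dn_ge x i Hx'). pose proof (Hx i Hi).
    assert (Hg : grad x i = - d i * Dn x i / x i) by (rewrite Hd; field; lra).
    rewrite Hg.
    assert (matvec n (Mabs Q) x i <= Dn x i) by (unfold Dn; pose proof (negpart_nonneg (h i)); lra).
    assert (0 <= d i * d i / x i) by (apply Rmult_le_pos; [nra| left; apply Rinv_0_lt_compat; lra]).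
    unfold Rdiv in *.
    replace (- d i * Dn x i * / x i * d i) with (- Dn x i * (d i * d i * / x i)) by ring.
    replace (/ 2 * (matvec n (Mabs Q) x i * (d i * d i) * / x i)) with (/2 * matvec n (Mabs Q) x i * (d i * d i * / x i)) by ring.
    replace (/ 2 * Dn x i * (d i * d i) * / x i) with (/2 * Dn x i * (d i * d i * / x i)) by ring.
    nra. }
  lra. Qed.

Lemma gain_nonneg x i : (forall j, (j < n)%nat -> 0 < x j) -> (i < n)%nat -> 0 <= gain x i.
Proof. intros Hx Hi. unfold gain. pose proof (Dn_ge x i (fun j Hj => Rlt_le _ _ (Hx j Hj))).
  pose proof (Hx i Hi). apply Rmult_le_pos. apply Rmult_le_pos. lra.
  apply Rle_0_sqr.
  left; apply Rinv_0_lt_compat; lra. Qed.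

Lemma gain_pos x i : (forall j, (j < n)%nat -> 0 < x j) -> (i < n)%nat ->
  step n Q h delta x i <> x i -> 0 < gain x i.
Proof. intros Hx Hi Hne. unfold gain. pose proof (Dn_ge x i (fun j Hj => Rlt_le _ _ (Hx j Hj))).
  pose proof (Hx i Hi). assert (step n Q h delta x i - x i <> 0) by lra.
  apply Rmult_lt_0_compat. apply Rmult_lt_0_compat. nra.
  apply Rsqr_pos_lt in H1. unfold Rsqr in H1. auto.
  apply Rinv_0_lt_compat; lra. Qed.

Lemma gain_lower x i B : (forall j, (j < n)%nat -> 0 < x j) -> (i < n)%nat -> x i <= B ->
  delta / (2 * B) * ((step n Q h delta x i - x i) * (step n Q h delta x i - x i)) <= gain x i.
Proof. intros Hx Hi HB. unfold gain. pose proof (Dn_ge x i (fun j Hj => Rlt_le _ _ (Hx j Hj))).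
  pose proof (Hx i Hi). set (s := (step n Q h delta x i - x i) * (step n Q h delta x i - x i)).
  assert (0 <= s) by (apply Rle_0_sqr).
  unfold Rdiv. rewrite Rinv_mult.
  assert (/ B <= / x i) by (apply Rinv_le_contravar; lra).
  assert (0 < / B) by (apply Rinv_0_lt_compat; lra).
  assert (0 < / x i) by (apply Rinv_0_lt_compat; lra).
  assert (delta * / B <= Dn x i * / x i) by nra.
  nra. Qed.

Lemma step_pos x i : (forall j, (j < n)%nat -> 0 < x j) -> (i < n)%nat -> 0 < step n Q h delta x i.
Proof. intros Hx Hi. unfold step. pose proof (Hx i Hi).
  assert (0 <= matvec n (Mneg Q) x i). { apply rsum_nonneg; intros. apply Rmult_le_pos.
    unfold Mneg; apply negpart_nonneg. left; auto. }
  assert (0 <= matvec n (Mabs Q) x i). { apply rsum_nonneg; intros. rewrite Mabs_abs. apply Rmult_le_pos.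
    apply Rabs_pos. left; auto. }
  pose proof (pospart_nonneg (h i)). pose proof (negpart_nonneg (h i)).
  apply Rmult_lt_0_compat; auto. apply Rdiv_lt_0_compat; lra. Qed.

End Alg.

Definition near (n : nat) (y z : nat -> R) (e : R) := forall i, (i < n)%nat -> Rabs (y i - z i) < e.
Definition cont (n : nat) (f : (nat -> R) -> R) (z : nat -> R) :=
  forall e, 0 < e -> exists eta, 0 < eta /\ forall y, near n y z eta -> Rabs (f y - f z) < e.

Lemma near_mono n y z e e' : e <= e' -> near n y z e -> near n y z e'.
Proof. intros H1 H2 i Hi. specialize (H2 i Hi). lra. Qed.

Lemma cont_const n c z : cont n (fun _ => c) z.
Proof. intros e He. exists 1. split. lra. intros. replace (c - c) with 0 by ring. rewrite Rabs_R0. auto. Qed.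

Lemma cont_coord n i z : (i < n)%nat -> cont n (fun y => y i) z.
Proof. intros Hi e He. exists e. split; auto. Qed.

Lemma cont_plus n f g z : cont n f z -> cont n g z -> cont n (fun y => f y + g y) z.
Proof. intros Hf Hg e He. destruct (Hf (e/2)) as [a [Ha Hfa]]. lra. destruct (Hg (e/2)) as [b [Hb Hgb]]. lra.
  exists (Rmin a b). split. apply Rmin_glb_lt; auto. intros y Hy.
  specialize (Hfa y (near_mono _ _ _ _ _ (Rmin_l a b) Hy)).
  specialize (Hgb y (near_mono _ _ _ _ _ (Rmin_r a b) Hy)).
  replace (f y + g y - (f z + g z)) with ((f y - f z) + (g y - g z)) by ring.
  eapply Rle_lt_trans. apply Rabs_triang. lra. Qed.

Lemma cont_opp n f z : cont n f z -> cont n (fun y => - f y) z.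
Proof. intros Hf e He. destruct (Hf e He) as [a [Ha H]]. exists a. split; auto. intros y Hy.
  replace (- f y - - f z) with (- (f y - f z)) by ring. rewrite Rabs_Ropp. auto. Qed.

Lemma cont_minus n f g z : cont n f z -> cont n g z -> cont n (fun y => f y - g y) z.
Proof. intros. apply (cont_plus n f (fun y => - g y)); auto. apply cont_opp; auto. Qed.

Lemma cont_mult n f g z : cont n f z -> cont n g z -> cont n (fun y => f y * g y) z.
Proof. intros Hf Hg e He.
  set (c := Rmin 1 (e / (Rabs (f z) + Rabs (g z) + 1))).
  assert (Hc : 0 < c). { apply Rmin_glb_lt. lra. apply Rdiv_lt_0_compat; auto.
    pose proof (Rabs_pos (f z)); pose proof (Rabs_pos (g z)); lra. }
  assert (Hc1 : c <= 1) by apply Rmin_l.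
  assert (Hc2 : c * (Rabs (f z) + Rabs (g z) + 1) <= e).
  { pose proof (Rmin_r 1 (e / (Rabs (f z) + Rabs (g z) + 1))). fold c in H.
    pose proof (Rabs_pos (f z)); pose proof (Rabs_pos (g z)).
    apply Rmult_le_compat_r with (r := Rabs (f z) + Rabs (g z) + 1) in H; [|lra].
    unfold Rdiv in H. rewrite Rmult_assoc, Rinv_l in H; lra. }
  destruct (Hf c Hc) as [a [Ha Hfa]]. destruct (Hg c Hc) as [b [Hb Hgb]].
  exists (Rmin a b). split. apply Rmin_glb_lt; auto. intros y Hy.
  specialize (Hfa y (near_mono _ _ _ _ _ (Rmin_l a b) Hy)).
  specialize (Hgb y (near_mono _ _ _ _ _ (Rmin_r a b) Hy)).
  replace (f y * g y - f z * g z) with ((f y - f z) * (g y - g z) + f z * (g y - g z) + g z * (f y - f z)) by ring.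
  set (p := f y - f z) in *. set (q := g y - g z) in *. change (Rabs p < c) in Hfa. change (Rabs q < c) in Hgb.
  pose proof (Rabs_triang (p * q + f z * q) (g z * p)).
  pose proof (Rabs_triang (p * q) (f z * q)). rewrite !Rabs_mult in *.
  pose proof (Rabs_pos p); pose proof (Rabs_pos q).
  pose proof (Rabs_pos (f z)); pose proof (Rabs_pos (g z)).
  assert (Rabs p * Rabs q <= Rabs q). { rewrite <- (Rmult_1_l (Rabs q)) at 2. apply Rmult_le_compat_r. all: lra. }
  assert (Rabs (f z) * Rabs q <= Rabs (f z) * c) by (apply Rmult_le_compat_l; lra).
  assert (Rabs (g z) * Rabs p <= Rabs (g z) * c) by (apply Rmult_le_compat_l; lra).
  lra. Qed.

Lemma cont_rsum n m (F : nat -> (nat -> R) -> R) z :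
  (forall j, (j < m)%nat -> cont n (F j) z) -> cont n (fun y => rsum m (fun j => F j y)) z.
Proof. induction m; intros H; simpl. apply cont_const.
  apply (cont_plus n (fun y => rsum m (fun j => F j y)) (F m)). apply IHm; intros; apply H; lia. apply H; lia. Qed.

Lemma cont_matvec n M z i : cont n (fun y => matvec n M y i) z.
Proof. unfold matvec. apply (cont_rsum n n (fun j y => M i j * y j)). intros j Hj.
  apply (cont_mult n (fun _ => M i j) (fun y => y j)). apply cont_const. apply cont_coord; auto. Qed.

Lemma cont_quad n M z : cont n (fun y => quadform n M y) z.
Proof. unfold quadform. apply (cont_rsum n n (fun i y => y i * matvec n M y i)). intros.
  apply (cont_mult n (fun y => y j) (fun y => matvec n M y j)). apply cont_coord; auto. apply cont_matvec. Qed.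

Lemma cont_F n Q h z : cont n (Fobj n Q h) z.
Proof. unfold Fobj. apply (cont_minus n (fun y => / 2 * quadform n Q y) (fun y => rsum n (fun i => y i * h i))).
  apply (cont_mult n (fun _ => /2) (fun y => quadform n Q y)). apply cont_const. apply cont_quad.
  apply (cont_rsum n n (fun i y => y i * h i)). intros.
  apply (cont_mult n (fun y => y j) (fun _ => h j)). apply cont_coord; auto. apply cont_const. Qed.

Definition infoften (P : nat -> Prop) := forall N, exists k, (N <= k)%nat /\ P k.

Lemma cluster1 (P : R -> nat -> Prop) (v : nat -> R) B :
  (forall e e' k, 0 < e <= e' -> P e k -> P e' k) ->
  (forall e, 0 < e -> infoften (P e)) ->
  (forall k, Rabs (v k) <= B) ->
  exists w, forall e, 0 < e -> infoften (fun k => P e k /\ Rabs (v k - w) < e).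
Proof. intros Hmono Hinf HB.
  set (A := fun t => forall e, 0 < e -> forall N, exists k, (N <= k)%nat /\ P e k /\ t - e < v k).
  assert (HA0 : A (- B)). { intros e He N. destruct (Hinf e He N) as [k [Hk Pk]]. exists k. repeat split; auto.
    specialize (HB k). apply Rabs_le_inv in HB. lra. }
  assert (Hbd : bound A). { exists (B + 1). intros t Ht. destruct (Ht 1 ltac:(lra) 0%nat) as [k [_ [_ Hk]]].
    specialize (HB k). apply Rabs_le_inv in HB. lra. }
  destruct (completeness A Hbd (ex_intro _ _ HA0)) as [w [Hub Hlub]].
  assert (HwA : A w).
  { intros e He N. assert (exists t, A t /\ w - e/2 < t).
    { apply NNPP. intros Hn. assert (w <= w - e/2). apply Hlub. intros t Ht.
      apply Rnot_lt_le. intros Hlt. apply Hn. exists t; auto. lra. }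
    destruct H as [t [Ht Hlt]]. destruct (Ht (e/2) ltac:(lra) N) as [k [Hk [Pk Hv]]].
    exists k. repeat split; auto. apply Hmono with (e/2); auto. lra. lra. }
  exists w. intros e He N.
  assert (Hn : ~ A (w + e/2)). { intros Ha. specialize (Hub _ Ha). lra. }
  unfold A in Hn. apply not_all_ex_not in Hn. destruct Hn as [e0 Hn].
  apply imply_to_and in Hn. destruct Hn as [He0 Hn].
  apply not_all_ex_not in Hn. destruct Hn as [N0 Hn].
  destruct (HwA (Rmin e e0) ltac:(apply Rmin_glb_lt; auto) (Nat.max N N0)) as [k [Hk [Pk Hv]]].
  assert (v k <= w + e/2 - e0).
  { apply Rnot_lt_le. intros Hlt. apply Hn. exists k. repeat split. lia.
    apply Hmono with (Rmin e e0); auto. split. apply Rmin_glb_lt; auto. apply Rmin_r. lra. }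
  exists k. split. lia. split. apply Hmono with (Rmin e e0); auto. split. apply Rmin_glb_lt; auto. apply Rmin_l.
  pose proof (Rmin_l e e0). apply Rabs_def1; lra. Qed.

Lemma BW m (u : nat -> nat -> R) B P :
  (forall k i, (i < m)%nat -> Rabs (u k i) <= B) -> infoften P ->
  exists z, forall e, 0 < e -> infoften (fun k => P k /\ near m (u k) z e).
Proof. induction m; intros HB HP.
  - exists (fun _ => 0). intros e He N. destruct (HP N) as [k [Hk Pk]]. exists k. repeat split; auto.
    intros i Hi; lia.
  - destruct IHm as [z Hz]. intros; apply HB; lia. auto.
    destruct (cluster1 (fun e k => P k /\ near m (u k) z e) (fun k => u k m) B) as [w Hw].
    + intros e e' k He [Pk Hn]. split; auto. apply near_mono with e; [lra|auto].
    + auto.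
    + intros; apply HB; lia.
    + exists (fun i => if Nat.ltb i m then z i else w). intros e He N.
      destruct (Hw e He N) as [k [Hk [[Pk Hn] Hv]]]. exists k. repeat split; auto.
      intros i Hi. destruct (Nat.ltb_spec i m). apply Hn; auto.
      assert (i = m) by lia. subst; auto. Qed.

Lemma cluster_cont n (u : nat -> nat -> R) z P f :
  (forall e, 0 < e -> infoften (fun k => P k /\ near n (u k) z e)) -> cont n f z ->
  forall e, 0 < e -> infoften (fun k => P k /\ near n (u k) z e /\ Rabs (f (u k) - f z) < e).
Proof. intros Hc Hf e He N. destruct (Hf e He) as [a [Ha Hfa]].
  destruct (Hc (Rmin e a) ltac:(apply Rmin_glb_lt; auto) N) as [k [Hk [Pk Hn]]].
  exists k. repeat split; auto. apply near_mono with (Rmin e a); auto. apply Rmin_l.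
  apply Hfa. apply near_mono with (Rmin e a); auto. apply Rmin_r. Qed.

Lemma le_eps a : (forall e, 0 < e -> a < e) -> a <= 0.
Proof. intros H. apply Rnot_lt_le. intros Ha. specialize (H a Ha). lra. Qed.

Lemma abs_eps a : (forall e, 0 < e -> Rabs a < e) -> a = 0.
Proof. intros H. destruct (Req_dec a 0); auto. specialize (H (Rabs a) (Rabs_pos_lt a H0)). lra. Qed.

Lemma small_inv e : 0 < e -> exists N : nat, / (INR N + 1) < e.
Proof. intros He. destruct (INR_unbounded (/ e)) as [N HN]. exists N.
  pose proof (pos_INR N). rewrite <- (Rinv_inv e). apply Rinv_lt_contravar.
  apply Rmult_lt_0_compat. apply Rinv_0_lt_compat; auto. lra. lra. Qed.

Lemma inv_mono (k N : nat) : (N <= k)%nat -> / (INR k + 1) <= / (INR N + 1).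
Proof. intros H. apply le_INR in H. pose proof (pos_INR N). apply Rinv_le_contravar; lra. Qed.

Definition sumsq n (x : nat -> R) := rsum n (fun i => x i * x i).

Lemma cont_sumsq n z : cont n (sumsq n) z.
Proof. unfold sumsq. apply (cont_rsum n n (fun i y => y i * y i)). intros.
  apply (cont_mult n (fun y => y j) (fun y => y j)); apply cont_coord; auto. Qed.

Lemma quad_scal n Q c x : quadform n Q (fun i => c * x i) = c * c * quadform n Q x.
Proof. unfold quadform, matvec. rewrite <- rsum_scal. apply rsum_ext; intros.
  assert (E: rsum n (fun j => Q i j * (c * x j)) = c * rsum n (fun j => Q i j * x j))
    by (rewrite <- rsum_scal; apply rsum_ext; intros; ring).
  rewrite E; ring. Qed.

Lemma sumsq_scal n c x : sumsq n (fun i => c * x i) = c * c * sumsq n x.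
Proof. unfold sumsq. rewrite <- rsum_scal. apply rsum_ext; intros; ring. Qed.

Lemma sumsq_nonneg n x : 0 <= sumsq n x.
Proof. apply rsum_nonneg; intros; apply Rle_0_sqr. Qed.

Lemma sumsq_zero n x : sumsq n x = 0 -> forall i, (i < n)%nat -> x i = 0.
Proof. intros H i Hi. pose proof (rsum_term n (fun i => x i * x i) i (fun j _ => Rle_0_sqr (x j)) Hi).
  fold (sumsq n x) in H0. pose proof (Rle_0_sqr (x i)). unfold Rsqr in H1.
  assert (x i * x i = 0) by lra. apply Rmult_integral in H2. tauto. Qed.

Lemma quad_zero n Q x : (forall i, (i < n)%nat -> x i = 0) -> quadform n Q x = 0.
Proof. intros H. apply rsum_zero. intros. rewrite H; auto. ring. Qed.

Lemma coercive n Q : pos_def n Q -> exists lam, 0 < lam /\ forall x, lam * sumsq n x <= quadform n Q x.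
Proof. intros HPD. apply NNPP. intros Hn.
  assert (Hk : forall k : nat, exists w, sumsq n w = 1 /\ quadform n Q w < / (INR k + 1)).
  { intros k. assert (Hl : 0 < / (INR k + 1)) by (apply Rinv_0_lt_compat; pose proof (pos_INR k); lra).
    assert (exists x, quadform n Q x < / (INR k + 1) * sumsq n x).
    { apply NNPP. intros Hn2. apply Hn. exists (/ (INR k + 1)). split; auto. intros x.
      apply Rnot_lt_le. intros Hlt. apply Hn2. exists x; auto. }
    destruct H as [x Hx]. pose proof (sumsq_nonneg n x).
    destruct (Req_dec (sumsq n x) 0) as [H0|H0].
    { rewrite (quad_zero n Q x (sumsq_zero n x H0)), H0 in Hx. lra. }
    assert (HS : 0 < sumsq n x) by lra.
    set (s := / sqrt (sumsq n x)).
    assert (Hs2 : s * s * sumsq n x = 1).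
    { unfold s. rewrite <- Rinv_mult, sqrt_sqrt by lra. field. lra. }
    exists (fun i => s * x i). rewrite sumsq_scal, quad_scal. split; auto.
    assert (0 < s * s) by (unfold s; pose proof (sqrt_lt_R0 _ HS); apply Rmult_lt_0_compat; apply Rinv_0_lt_compat; auto).
    apply Rmult_lt_compat_l with (r := s * s) in Hx; auto.
    replace (s*s*(/(INR k +1) * sumsq n x)) with (/(INR k+1) * (s*s*sumsq n x)) in Hx by ring.
    rewrite Hs2 in Hx. lra. }
  set (W := fun k => proj1_sig (constructive_indefinite_description _ (Hk k))).
  assert (HW : forall k, sumsq n (W k) = 1 /\ quadform n Q (W k) < / (INR k + 1)).
  { intros k. unfold W. destruct (constructive_indefinite_description _ (Hk k)); auto. }
  assert (HB : forall k i, (i < n)%nat -> Rabs (W k i) <= 1).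
  { intros k i Hi. destruct (HW k) as [H1 _]. pose proof (rsum_term n (fun i => W k i * W k i) i (fun j _ => Rle_0_sqr (W k j)) Hi).
    fold (sumsq n (W k)) in H. rewrite H1 in H. apply Rabs_le.
    destruct (Rle_dec (W k i) 1); destruct (Rle_dec (-1) (W k i)); split; nra. }
  destruct (BW n W 1 (fun _ => True) HB) as [z Hz].
  { intros N; exists N; split; auto. }
  assert (Hs : sumsq n z = 1).
  { assert (sumsq n z - 1 = 0). { apply abs_eps. intros e He.
      destruct (cluster_cont n W z _ (sumsq n) Hz (cont_sumsq n z) e He 0%nat) as [k [_ [_ [_ Hk']]]].
      rewrite (proj1 (HW k)) in Hk'. rewrite <- Rabs_Ropp. replace (- (sumsq n z - 1)) with (1 - sumsq n z) by ring. auto. }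
    lra. }
  assert (Hq : quadform n Q z <= 0).
  { apply le_eps. intros e He. destruct (small_inv (e/2)) as [N HN]. lra.
    destruct (cluster_cont n W z _ (quadform n Q) Hz (cont_quad n Q z) (e/2) ltac:(lra) N) as [k [Hkk [_ [_ Hk']]]].
    pose proof (inv_mono k N Hkk). destruct (HW k) as [_ H2]. apply Rabs_lt_inv in Hk'. lra. }
  assert (Hex : exists i, (i < n)%nat /\ z i <> 0).
  { apply NNPP. intros Hn3. assert (sumsq n z = 0). { apply rsum_zero. intros i Hi.
      destruct (Req_dec (z i) 0). rewrite H; ring. exfalso; apply Hn3; exists i; auto. } lra. }
  specialize (HPD z Hex). lra. Qed.

Lemma finite_min m (P : nat -> R -> Prop) :
  (forall j, (j < m)%nat -> exists r, 0 < r /\ forall r', 0 < r' <= r -> P j r') ->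
  exists r, 0 < r /\ forall j, (j < m)%nat -> P j r.
Proof. induction m; intros H.
  - exists 1. split. lra. intros; lia.
  - destruct IHm as [r [Hr Hr']]. intros; apply H; lia.
    destruct (H m ltac:(lia)) as [s [Hs Hs']].
    exists (Rmin r s). split. apply Rmin_glb_lt; auto. intros j Hj.
    destruct (Nat.eq_dec j m). subst. apply Hs'. split. apply Rmin_glb_lt; auto. apply Rmin_r.
    (* need monotone for j < m *)
Abort.

Lemma finite_min m (P : nat -> R -> Prop) :
  (forall j, (j < m)%nat -> exists r, 0 < r /\ forall r', 0 < r' <= r -> P j r') ->
  exists r, 0 < r /\ forall j, (j < m)%nat -> forall r', 0 < r' <= r -> P j r'.
Proof. induction m; intros H.
  - exists 1. split. lra. intros; lia.
  - destruct IHm as [r [Hr Hr']]. intros; apply H; lia.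
    destruct (H m ltac:(lia)) as [s [Hs Hs']].
    exists (Rmin r s). split. apply Rmin_glb_lt; auto. intros j Hj r' Hr''.
    pose proof (Rmin_l r s). pose proof (Rmin_r r s).
    destruct (Nat.eq_dec j m). subst. apply Hs'. lra.
    apply Hr'. lia. lra. Qed.

Lemma discrete_ivt (P : nat -> Prop) m : forall a, P a -> ~ P (a + m)%nat -> exists k, (a <= k)%nat /\ P k /\ ~ P (S k).
Proof. induction m; intros a Ha Hn.
  - rewrite Nat.add_0_r in Hn. contradiction.
  - destruct (classic (P (S a))).
    + destruct (IHm (S a) H) as [k [Hk [Pk Pn]]]. replace (S a + m)%nat with (a + S m)%nat by lia. auto.
      exists k. split; [lia|auto].
    + exists a. auto. Qed.

Lemma matvec_minus n M x y i : matvec n M (fun j => x j - y j) i = matvec n M x i - matvec n M y i.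
Proof. unfold matvec. rewrite <- rsum_minus. apply rsum_ext; intros; ring. Qed.

Lemma cont_grad n Q h z i : cont n (fun y => grad n Q h y i) z.
Proof. unfold grad. apply (cont_minus n (fun y => matvec n Q y i) (fun _ => h i)). apply cont_matvec. apply cont_const. Qed.

Lemma cont_phi n Q h z i : (i < n)%nat -> cont n (fun y => y i * grad n Q h y i) z.
Proof. intros. apply (cont_mult n (fun y => y i) (fun y => grad n Q h y i)). apply cont_coord; auto. apply cont_grad. Qed.

Section Main.
Variable n : nat.
Variable Q : nat -> nat -> R.
Variable h : nat -> R.
Variable delta : R.
Variable x0 : nat -> R.
Hypothesis HQs : symmetric n Q.
Hypothesis HQpd : pos_def n Q.
Hypothesis Hdelta : 0 < delta.
Hypothesis Hx0 : forall i, (i < n)%nat -> 0 < x0 i.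

Let X := iterate n Q h delta x0.
Let F := Fobj n Q h.

Lemma Xpos : forall k i, (i < n)%nat -> 0 < X k i.
Proof. induction k; intros i Hi. apply Hx0; auto. simpl. apply step_pos; auto. Qed.

Lemma Xdesc k : F (X (S k)) <= F (X k) - rsum n (gain n Q h delta (X k)).
Proof. apply descent; auto. intros; apply Xpos; auto. Qed.

Lemma Xdec k : F (X (S k)) <= F (X k).
Proof. pose proof (Xdesc k). assert (0 <= rsum n (gain n Q h delta (X k))).
  { apply rsum_nonneg; intros. apply gain_nonneg; auto. intros; apply Xpos; auto. } lra. Qed.

Lemma Xdec_le k m : (k <= m)%nat -> F (X m) <= F (X k).
Proof. induction 1. lra. pose proof (Xdec m). lra. Qed.

Lemma Xstrict k : (exists i, (i < n)%nat /\ X (S k) i <> X k i) -> F (X (S k)) < F (X k).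
Proof. intros [i [Hi Hne]]. pose proof (Xdesc k).
  assert (0 < rsum n (gain n Q h delta (X k))).
  { apply rsum_pos_ex. intros; apply gain_nonneg; auto. intros; apply Xpos; auto.
    exists i. split; auto. apply gain_pos; auto. intros; apply Xpos; auto. } lra. Qed.

Definition Hsq := rsum n (fun i => h i * h i).

Lemma F_lower lam : 0 < lam -> (forall x, lam * sumsq n x <= quadform n Q x) ->
  forall x, lam / 4 * sumsq n x - Hsq / lam <= F x.
Proof. intros Hl Hq x. unfold F, Fobj. specialize (Hq x).
  assert (rsum n (fun i => x i * h i) <= lam / 4 * sumsq n x + Hsq / lam).
  { assert (E: lam/4 * sumsq n x + Hsq/lam = rsum n (fun i => lam/4 * (x i * x i) + /lam * (h i * h i))).
    { unfold sumsq, Hsq. rewrite rsum_plus, !rsum_scal. unfold Rdiv; ring. }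
    rewrite E. apply rsum_le; intros i Hi.
    assert (0 <= (lam / 2 * x i - h i) * (lam / 2 * x i - h i)) by apply Rle_0_sqr.
    assert (0 < / lam) by (apply Rinv_0_lt_compat; auto).
    assert (0 <= / lam * ((lam / 2 * x i - h i) * (lam / 2 * x i - h i))) by (apply Rmult_le_pos; lra).
    replace (/ lam * ((lam / 2 * x i - h i) * (lam / 2 * x i - h i))) with
      (lam / 4 * (x i * x i) - x i * h i + / lam * (h i * h i)) in H1 by (field; lra).
    lra. }
  lra. Qed.


Lemma abs_from_sq d eta : 0 < eta -> d * d < eta * eta -> Rabs d < eta.
Proof. intros He H. apply Rnot_le_lt. intros Hle. pose proof (Rsqr_abs d). unfold Rsqr in H0.
  pose proof (Rabs_pos d). assert (eta * eta <= Rabs d * Rabs d) by nra. lra. Qed.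

Section Bounds.
Variable lam : R.
Hypothesis Hlam : 0 < lam.
Hypothesis Hq : forall x, lam * sumsq n x <= quadform n Q x.

Definition S0 := 4 * (Fobj n Q h x0 + Hsq / lam) / lam.
Definition Bd := 1 + S0.

Lemma S0_nonneg : 0 <= S0.
Proof. pose proof (F_lower lam Hlam Hq x0). pose proof (sumsq_nonneg n x0). fold F.
  unfold S0. fold F. apply Rmult_le_pos. apply Rmult_le_pos. lra.
  assert (0 <= lam / 4 * sumsq n x0) by (apply Rmult_le_pos; lra). lra.
  left; apply Rinv_0_lt_compat; auto. Qed.

Lemma Bd_pos : 0 < Bd.
Proof. pose proof S0_nonneg. unfold Bd; lra. Qed.

Lemma Xsumsq k : sumsq n (X k) <= S0.
Proof. pose proof (F_lower lam Hlam Hq (X k)). pose proof (Xdec_le 0 k ltac:(lia)).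
  unfold S0. replace (X 0) with x0 in H0 by auto. fold F.
  apply Rmult_le_reg_l with (r := lam / 4). apply Rmult_lt_0_compat; lra.
  replace (lam / 4 * (4 * (F x0 + Hsq / lam) / lam)) with (F x0 + Hsq / lam) by (field; lra). lra. Qed.

Lemma Xbound k i : (i < n)%nat -> Rabs (X k i) <= Bd.
Proof. intros Hi. pose proof (Xpos k i Hi). rewrite Rabs_right by lra.
  pose proof (rsum_term n (fun i => X k i * X k i) i (fun j _ => Rle_0_sqr (X k j)) Hi).
  fold (sumsq n (X k)) in H0. pose proof (Xsumsq k). unfold Bd.
  assert (X k i <= 1 + X k i * X k i) by nra. lra. Qed.

Lemma Flb k : - (Hsq / lam) <= F (X k).
Proof. pose proof (F_lower lam Hlam Hq (X k)). pose proof (sumsq_nonneg n (X k)).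
  assert (0 <= lam / 4 * sumsq n (X k)) by (apply Rmult_le_pos; lra). lra. Qed.

Variable L : R.
Hypothesis HL : Un_cv (fun k => F (X k)) L.

Lemma L_le k : L <= F (X k).
Proof. apply decreasing_ineq with (Un := fun k => F (X k)); auto. intros m. apply Xdec. Qed.

Lemma step_small : forall eta, 0 < eta -> exists K, forall k, (K <= k)%nat -> forall i, (i < n)%nat ->
  Rabs (X (S k) i - X k i) < eta.
Proof. intros eta He. pose proof Bd_pos as HB. set (c := delta / (2 * Bd)).
  assert (Hc : 0 < c) by (unfold c; apply Rdiv_lt_0_compat; lra).
  destruct (HL (c * (eta * eta) / 2)) as [K HK]. { apply Rdiv_lt_0_compat. apply Rmult_lt_0_compat; nra. lra. }
  exists K. intros k Hk i Hi.
  pose proof (HK k Hk). pose proof (HK (S k) ltac:(lia)). unfold Rdist in *.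
  apply Rabs_lt_inv in H. apply Rabs_lt_inv in H0.
  pose proof (Xdesc k).
  assert (gain n Q h delta (X k) i <= rsum n (gain n Q h delta (X k))).
  { apply rsum_term; auto. intros; apply gain_nonneg; auto. intros; apply Xpos; auto. }
  pose proof (gain_lower n Q h delta Hdelta (X k) i Bd (fun j Hj => Xpos k j Hj) Hi).
  assert (X k i <= Bd) by (pose proof (Xbound k i Hi); apply Rabs_le_inv in H4; lra).
  specialize (H3 H4). fold c in H3. simpl in H1. fold (X k) in H1. fold F in H1.
  change (X (S k)) with (step n Q h delta (X k)) in *.
  apply abs_from_sq; auto.
  apply Rmult_lt_reg_l with c; auto. lra. Qed.

Definition Cb i := Bd * rsum n (fun j => Rabs (Q i j)) + Rabs (h i) + delta.

Lemma Dn_le k i : Dn n Q h delta (X k) i <= Cb i.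
Proof. unfold Dn, Cb. pose proof (negpart_le (h i)).
  assert (matvec n (Mabs Q) (X k) i <= Bd * rsum n (fun j => Rabs (Q i j))).
  { unfold matvec. rewrite <- rsum_scal. apply rsum_le; intros j Hj. rewrite Mabs_abs.
    pose proof (Xbound k j Hj). apply Rabs_le_inv in H0. pose proof (Rabs_pos (Q i j)).
    rewrite (Rmult_comm Bd). apply Rmult_le_compat_l; lra. } lra. Qed.

Lemma phi_small i : (i < n)%nat -> forall e, 0 < e -> exists K, forall k, (K <= k)%nat ->
  Rabs (X k i * grad n Q h (X k) i) < e.
Proof. intros Hi e He.
  assert (HC : delta <= Cb i). { pose proof (Dn_le 0 i). pose proof (Dn_ge n Q h delta (X 0) i (fun j Hj => Rlt_le _ _ (Xpos 0 j Hj))). lra. }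
  destruct (step_small (e / Cb i)) as [K HK]. apply Rdiv_lt_0_compat; lra.
  exists K. intros k Hk. specialize (HK k Hk i Hi).
  pose proof (step_eq n Q h delta Hdelta (X k) i (fun j Hj => Rlt_le _ _ (Xpos k j Hj))).
  change (X (S k)) with (step n Q h delta (X k)) in *.
  pose proof (Dn_ge n Q h delta (X k) i (fun j Hj => Rlt_le _ _ (Xpos k j Hj))).
  pose proof (Dn_le k i).
  assert (E: X k i * grad n Q h (X k) i = - (Dn n Q h delta (X k) i * (step n Q h delta (X k) i - X k i))).
  { rewrite H. field. lra. }
  rewrite E, Rabs_Ropp, Rabs_mult, (Rabs_right (Dn _ _ _ _ _ _)) by lra.
  apply Rle_lt_trans with (Cb i * Rabs (step n Q h delta (X k) i - X k i)).
  apply Rmult_le_compat_r; auto. apply Rabs_pos.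
  apply Rmult_lt_compat_l with (r := Cb i) in HK; [|lra].
  replace (Cb i * (e / Cb i)) with e in HK by (field; lra). auto. Qed.

Lemma qs_cluster (P : nat -> Prop) z :
  (forall e, 0 < e -> infoften (fun k => P k /\ near n (X k) z e)) ->
  (forall i, (i < n)%nat -> 0 <= z i) /\ (forall i, (i < n)%nat -> z i * grad n Q h z i = 0).
Proof. intros Hz. split.
  - intros i Hi. apply Rnot_lt_le. intros Hlt. destruct (Hz (- z i) ltac:(lra) 0%nat) as [k [_ [_ Hn]]].
    specialize (Hn i Hi). apply Rabs_lt_inv in Hn. pose proof (Xpos k i Hi). lra.
  - intros i Hi. apply abs_eps. intros e He.
    destruct (phi_small i Hi (e/2) ltac:(lra)) as [K HK].
    destruct (cluster_cont n X z P _ Hz (cont_phi n Q h z i Hi) (e/2) ltac:(lra) K) as [k [Hk [_ [_ Hc]]]].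
    specialize (HK k Hk).
    pose proof (Rabs_triang (X k i * grad n Q h (X k) i) (- (X k i * grad n Q h (X k) i - z i * grad n Q h z i))).
    rewrite Rabs_Ropp in H. replace (X k i * grad n Q h (X k) i + - (X k i * grad n Q h (X k) i - z i * grad n Q h z i)) with (z i * grad n Q h z i) in H by ring.
    lra. Qed.


Lemma isolation z : (forall i, (i < n)%nat -> 0 <= z i) -> (forall i, (i < n)%nat -> z i * grad n Q h z i = 0) ->
  exists rho, 0 < rho /\
   (forall j, (j < n)%nat -> grad n Q h z j < 0 -> forall y, near n y z rho -> grad n Q h y j < 0) /\
   (forall y, (forall i, (i < n)%nat -> 0 <= y i) -> (forall i, (i < n)%nat -> y i * grad n Q h y i = 0) ->
      near n y z rho -> forall j, (j < n)%nat -> y j = z j).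
Proof. intros Hz0 Hzq.
  destruct (finite_min n (fun j rho => (0 < z j -> rho <= z j) /\
      (grad n Q h z j < 0 -> forall y, near n y z rho -> grad n Q h y j < 0))) as [rho [Hrho Hp]].
  { intros j Hj.
    assert (Hg: exists r2, 0 < r2 /\ (grad n Q h z j < 0 -> forall y, near n y z r2 -> grad n Q h y j < 0)).
    { destruct (Rlt_dec (grad n Q h z j) 0) as [Hlt|Hge].
      - destruct (cont_grad n Q h z j (- grad n Q h z j) ltac:(lra)) as [eta [Heta Hc]].
        exists eta. split; auto. intros _ y Hy. specialize (Hc y Hy). apply Rabs_lt_inv in Hc. lra.
      - exists 1. split. lra. intros; contradiction. }
    destruct Hg as [r2 [Hr2 Hg]].
    set (r1 := if Rlt_dec 0 (z j) then z j else 1).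
    assert (Hr1 : 0 < r1 /\ (0 < z j -> r1 <= z j)).
    { unfold r1. destruct (Rlt_dec 0 (z j)); split; intros; try lra. }
    exists (Rmin r1 r2). split. apply Rmin_glb_lt; tauto. intros r' Hr'. pose proof (Rmin_l r1 r2). pose proof (Rmin_r r1 r2).
    split. intros Hzj. destruct Hr1 as [_ Hr1]. specialize (Hr1 Hzj). lra.
    intros Hgj y Hy. apply Hg; auto. apply near_mono with r'; auto. lra. }
  exists rho. split; auto. split.
  - intros j Hj Hgj y Hy. apply (Hp j Hj rho (conj Hrho (Rle_refl _))); auto.
  - intros y Hy0 Hyq Hy.
    set (e := fun j => y j - z j).
    assert (Hqe : quadform n Q e <= 0).
    { unfold quadform. rewrite <- (rsum_zero n (fun _ => 0)) by auto. apply rsum_le. intros j Hj.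
      unfold e. rewrite matvec_minus.
      replace (matvec n Q y j - matvec n Q z j) with (grad n Q h y j - grad n Q h z j) by (unfold grad; ring).
      destruct (Hp j Hj rho (conj Hrho (Rle_refl _))) as [P1 P2].
      pose proof (Hyq j Hj). pose proof (Hzq j Hj). pose proof (Hy j Hj). apply Rabs_lt_inv in H1.
      pose proof (Hy0 j Hj). pose proof (Hz0 j Hj).
      destruct (Rlt_dec 0 (z j)) as [Hzp|Hzn].
      - specialize (P1 Hzp). assert (y j <> 0) by lra.
        assert (grad n Q h y j = 0). { apply Rmult_integral in H. destruct H; [contradiction|auto]. }
        assert (grad n Q h z j = 0). { apply Rmult_integral in H0. destruct H0; [lra|auto]. }
        rewrite H5, H6. lra.
      - assert (z j = 0) by lra. rewrite H4.
        destruct (Rlt_dec (grad n Q h z j) 0) as [Hgn|Hgp].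
        + specialize (P2 Hgn y (near_mono _ _ _ _ _ (Rle_refl _) Hy)).
          assert (y j = 0). { apply Rmult_integral in H. destruct H; [auto|lra]. }
          rewrite H5. lra.
        + replace ((y j - 0) * (grad n Q h y j - grad n Q h z j)) with (y j * grad n Q h y j - y j * grad n Q h z j) by ring.
          rewrite H. assert (0 <= y j * grad n Q h z j) by (apply Rmult_le_pos; lra). lra. }
    intros j Hj. apply NNPP. intros Hne.
    assert (0 < quadform n Q e). { apply HQpd. exists j. split; auto. unfold e. lra. } lra. Qed.

Lemma grad_nonneg z : (forall e, 0 < e -> infoften (fun k => True /\ near n (X k) z e)) ->
  forall i, (i < n)%nat -> 0 <= grad n Q h z i.
Proof. intros Hz.
  destruct (qs_cluster _ z Hz) as [Hz0 Hzq].
  intros i0 Hi0. apply Rnot_lt_le. intros Hneg.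
  assert (Hzi0 : z i0 = 0). { specialize (Hzq i0 Hi0). apply Rmult_integral in Hzq. destruct Hzq; [auto|lra]. }
  destruct (isolation z Hz0 Hzq) as [rho [Hrho [Hgr Hiso]]].
  set (r := rho / 2).
  assert (Hr : 0 < r) by (unfold r; lra).
  assert (HA : exists K, forall k, (K <= k)%nat -> near n (X k) z r).
  { apply NNPP. intros HA.
    assert (HA' : forall K, exists k, (K <= k)%nat /\ ~ near n (X k) z r).
    { intros K. apply NNPP. intros Hn. apply HA. exists K. intros k Hk. apply NNPP. intros Hn2. apply Hn. exists k; auto. }
    destruct (step_small (r/2) ltac:(lra)) as [K0 HK0].
    set (P := fun k => ~ near n (X k) z (r/2) /\ near n (X k) z r).
    assert (HP : infoften P).
    { intros N. destruct (Hz (r/2) ltac:(lra) (Nat.max N K0)) as [k1 [Hk1 [_ Hn1]]].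
      destruct (HA' k1) as [k2 [Hk2 Hn2]].
      assert (Hn2' : ~ near n (X (k1 + (k2 - k1))%nat) z (r/2)).
      { replace (k1 + (k2 - k1))%nat with k2 by lia. intros Hc. apply Hn2. apply near_mono with (r/2); auto. lra. }
      destruct (discrete_ivt (fun k => near n (X k) z (r/2)) (k2 - k1) k1 Hn1 Hn2') as [k [Hk [Pk Pn]]].
      exists (S k). split. lia. split; auto.
      intros j Hj. specialize (HK0 k ltac:(lia) j Hj). specialize (Pk j Hj).
      pose proof (Rabs_triang (X (S k) j - X k j) (X k j - z j)).
      replace (X (S k) j - X k j + (X k j - z j)) with (X (S k) j - z j) in H by ring. lra. }
    destruct (BW n X Bd P (fun k i Hi => Xbound k i Hi) HP) as [z' Hz'].
    assert (Hz'' : forall e, 0 < e -> infoften (fun k => P k /\ near n (X k) z' e)) by auto.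
    destruct (qs_cluster P z' Hz'') as [Hz'0 Hz'q].
    assert (Hnear : near n z' z rho).
    { intros j Hj. destruct (Hz' (r/2) ltac:(lra) 0%nat) as [k [_ [[_ Pk] Hnk]]].
      specialize (Pk j Hj). specialize (Hnk j Hj).
      pose proof (Rabs_triang (z' j - X k j) (X k j - z j)).
      replace (z' j - X k j + (X k j - z j)) with (z' j - z j) in H by ring.
      rewrite <- Rabs_Ropp in Hnk. replace (- (X k j - z' j)) with (z' j - X k j) in Hnk by ring.
      unfold r in *. lra. }
    specialize (Hiso z' Hz'0 Hz'q Hnear).
    destruct (Hz' (r/4) ltac:(lra) 0%nat) as [k [_ [[Pk _] Hnk]]].
    apply Pk. intros j Hj. specialize (Hnk j Hj). rewrite (Hiso j Hj) in Hnk. lra. }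
  destruct HA as [K HK].
  assert (Hinc : forall m, X K i0 <= X (K + m)%nat i0).
  { induction m. rewrite Nat.add_0_r. lra.
    replace (K + S m)%nat with (S (K + m)) by lia.
    change (X (S (K + m))) with (step n Q h delta (X (K + m)%nat)).
    rewrite step_eq; auto. 2: intros j Hj; left; apply Xpos; auto.
    assert (grad n Q h (X (K + m)%nat) i0 < 0).
    { apply Hgr; auto. apply near_mono with r. unfold r; lra. apply HK; lia. }
    pose proof (Xpos (K + m) i0 Hi0).
    pose proof (Dn_ge n Q h delta (X (K + m)%nat) i0 (fun j Hj => Rlt_le _ _ (Xpos _ j Hj))).
    assert (X (K + m)%nat i0 * grad n Q h (X (K + m)%nat) i0 / Dn n Q h delta (X (K + m)%nat) i0 < 0).
    { unfold Rdiv. apply Rmult_neg_pos. apply Rmult_pos_neg; auto. apply Rinv_0_lt_compat; lra. }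
    lra. }
  pose proof (Xpos K i0 Hi0).
  destruct (Hz (X K i0) H K) as [k [Hk [_ Hn]]].
  specialize (Hn i0 Hi0). rewrite Hzi0 in Hn. apply Rabs_lt_inv in Hn.
  specialize (Hinc (k - K)%nat). replace (K + (k - K))%nat with k in Hinc by lia. lra. Qed.

End Bounds.
End Main.

Lemma kkt_opt n Q h z : symmetric n Q -> (forall x, 0 <= quadform n Q x) ->
  (forall i, (i < n)%nat -> z i * grad n Q h z i = 0) ->
  (forall i, (i < n)%nat -> 0 <= grad n Q h z i) ->
  forall y, (forall i, (i < n)%nat -> 0 <= y i) -> Fobj n Q h z <= Fobj n Q h y.
Proof. intros HQs Hpsd Hzq Hg y Hy.
  assert (E: y = fun i => z i + (y i - z i)) by (apply functional_extensionality; intros; ring).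
  rewrite E, F_plus by auto.
  assert (0 <= rsum n (fun i => (y i - z i) * grad n Q h z i)).
  { apply rsum_nonneg. intros i Hi. replace ((y i - z i) * grad n Q h z i) with (y i * grad n Q h z i - z i * grad n Q h z i) by ring.
    rewrite Hzq by auto. pose proof (Hy i Hi). pose proof (Hg i Hi). nra. }
  pose proof (Hpsd (fun i => y i - z i)). lra. Qed.

Theorem theorem1 (n : nat) (Q : nat -> nat -> R) (h : nat -> R) (delta : R)
  (x0 : nat -> R)
  (HQs : symmetric n Q) (HQpd : pos_def n Q) (Hdelta : 0 < delta)
  (Hx0 : forall i, (i < n)%nat -> 0 < x0 i) :
  (forall k i, (i < n)%nat -> 0 < iterate n Q h delta x0 k i) /\
  (forall k, Fobj n Q h (iterate n Q h delta x0 (S k))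
             <= Fobj n Q h (iterate n Q h delta x0 k)) /\
  (forall k, (exists i, (i < n)%nat /\
                iterate n Q h delta x0 (S k) i <> iterate n Q h delta x0 k i) ->
             Fobj n Q h (iterate n Q h delta x0 (S k))
             < Fobj n Q h (iterate n Q h delta x0 k)) /\
  (exists xs : nat -> R,
     (forall i, (i < n)%nat -> 0 <= xs i) /\
     (forall y : nat -> R, (forall i, (i < n)%nat -> 0 <= y i) ->
        Fobj n Q h xs <= Fobj n Q h y) /\
     (forall i, (i < n)%nat -> step n Q h delta xs i = xs i) /\
     Un_cv (fun k => Fobj n Q h (iterate n Q h delta x0 k)) (Fobj n Q h xs)).
Proof.
  split. apply Xpos; auto.
  split. apply Xdec; auto.
  split. apply Xstrict; auto.
  destruct (coercive n Q HQpd) as [lam [Hlam Hq]].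
  assert (Hpsd : forall x, 0 <= quadform n Q x).
  { intros x. pose proof (Hq x). pose proof (sumsq_nonneg n x). assert (0 <= lam * sumsq n x) by (apply Rmult_le_pos; lra). lra. }
  set (X := iterate n Q h delta x0).
  destruct (decreasing_cv (fun k => Fobj n Q h (X k))) as [L HL].
  { intros k. apply Xdec; auto. }
  { exists (Hsq n h / lam). intros r [k Hk]. unfold opp_seq in Hk. rewrite Hk.
    pose proof (Flb n Q h delta x0 lam Hlam Hq k). fold X in H. lra. }
  destruct (BW n X (Bd n Q h x0 lam) (fun _ => True) (Xbound n Q h delta x0 HQs Hdelta Hx0 lam Hlam Hq)) as [z Hz].
  { intros N; exists N; split; auto. }
  destruct (qs_cluster n Q h delta x0 HQs Hdelta Hx0 lam Hlam Hq L HL _ z Hz) as [Hz0 Hzq].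
  pose proof (grad_nonneg n Q h delta x0 HQs HQpd Hdelta Hx0 lam Hlam Hq L HL z Hz) as Hg.
  exists z. split; auto. split. apply kkt_opt; auto. split.
  - intros i Hi. rewrite step_eq; auto. rewrite Hzq by auto. unfold Rdiv. ring.
  - assert (HFz : Fobj n Q h z = L).
    { assert (Fobj n Q h z - L = 0); [|lra]. apply abs_eps. intros e He.
      destruct (HL (e/2) ltac:(lra)) as [N HN].
      destruct (cluster_cont n X z _ (Fobj n Q h) Hz (cont_F n Q h z) (e/2) ltac:(lra) N) as [k [Hk [_ [_ Hc]]]].
      specialize (HN k Hk). unfold Rdist in HN.
      pose proof (Rabs_triang (Fobj n Q h z - Fobj n Q h (X k)) (Fobj n Q h (X k) - L)).
      replace (Fobj n Q h z - Fobj n Q h (X k) + (Fobj n Q h (X k) - L)) with (Fobj n Q h z - L) in H by ring.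
      rewrite <- Rabs_Ropp in Hc. replace (- (Fobj n Q h (X k) - Fobj n Q h z)) with (Fobj n Q h z - Fobj n Q h (X k)) in Hc by ring.
      lra. }
    rewrite HFz. exact HL.
Qed.
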